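(* Let $\alpha: I\to M$ be a unit-speed curve on an oriented surface $M\subset E^3$ with Darboux frame $\{T,V,U\}$ and curvatures $k_g,k_n,\tau_g$, and assume $(k_g(s),k_n(s))\neq(0,0)$ for all $s\in I$. Let $\gamma(s)=\alpha(s)+y_1(s)T(s)+y_2(s)V(s)+y_3(s)U(s)$, with $y_1,y_2,y_3$ smooth functions on $I$, be an associated curve of $\alpha$ whose tangent vector $\gamma'(s)$ is linearly dependent with $T(s)$, i.e. $\gamma'(s)=R(s)T(s)$ with $R(s)\neq 0$ for all $s$. Then the following are equivalent: (i) $\gamma$ is a general helix; (ii) $\alpha$ is a helical curve on $M$; (iii) $\alpha$ is a $D_n$-Darboux slant helix on $M$.
   Context: $M$ is an oriented surface in Euclidean 3-space $E^3$ and $\alpha:I\to M$ is a unit-speed curve with arc-length parameter $s$. Its Darboux frame $\{T,V,U\}$ consists of the unit tangent $T=\alpha'$, the unit surface normal $U$ of $M$ along $\alpha$, and $V=U\times T$; it satisfies $T'=k_gV+k_nU$, $V'=-k_gT+\tau_gU$, $U'=-k_nT-\tau_gV$, where $k_g,k_n,\tau_g$ are the geodesic curvature, normal curvature and geodesic torsion of $\alpha$. A regular curve in $E^3$ is a general helix if its unit tangent makes a constant angle with a fixed direction. $\alpha$ is a helical curve on $M$ if there are a fixed unit vector $d$ and a constant angle $\theta$ with $\langle T,d\rangle=\cos\theta$. The normal Darboux vector field of $\alpha$ is $D_n=-k_nV+k_gU$; $\alpha$ is a $D_n$-Darboux slant helix if the unit vector field $D_n/\|D_n\|$ makes a constant angle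 with a fixed unit direction. *)

(* Defs.v *)
From Stdlib Require Import Reals.
From Coquelicot Require Import Coquelicot.
Open Scope R_scope.

Definition vec3 : Type := (R * R * R)%type.
Definition vx (v : vec3) : R := fst (fst v).
Definition vy (v : vec3) : R := snd (fst v).
Definition vz (v : vec3) : R := snd v.
Definition mkv (a b c : R) : vec3 := (a, b, c).

Definition vadd (u v : vec3) : vec3 := mkv (vx u + vx v) (vy u + vy v) (vz u + vz v).
Definition vscale (k : R) (v : vec3) : vec3 := mkv (k * vx v) (k * vy v) (k * vz v).
Definition dot (u v : vec3) : R := vx u * vx v + vy u * vy v + vz u * vz v.
Definition vnorm (v : vec3) : R := sqrt (dot v v).
Definition cross (u v : vec3) : vec3 :=
  mkv (vy u * vz v - vz u * vy v) (vz u * vx v - vx u * vz v) (vx u * vy v - vy u * vx v).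
Definition vzero : vec3 := mkv 0 0 0.

Definition in_I (a b : Rbar) (s : R) : Prop := Rbar_lt a s /\ Rbar_lt s b.

Definition vderiv (f : R -> vec3) (s : R) (f' : vec3) : Prop :=
  is_derive (fun t => vx (f t)) s (vx f') /\
  is_derive (fun t => vy (f t)) s (vy f') /\
  is_derive (fun t => vz (f t)) s (vz f').

Definition smooth_on (a b : Rbar) (f : R -> R) : Prop :=
  forall (n : nat) (s : R), in_I a b s -> ex_derive_n f n s.
Definition vsmooth_on (a b : Rbar) (f : R -> vec3) : Prop :=
  smooth_on a b (fun t => vx (f t)) /\ smooth_on a b (fun t => vy (f t)) /\
  smooth_on a b (fun t => vz (f t)).

(** [alpha] is a unit-speed curve on I whose Darboux frame is {T, V, U}
    (U = unit surface normal along alpha, V = U x T) with geodesic curvature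
    kg, normal curvature kn and geodesic torsion tg. *)
Definition darboux_frame (a b : Rbar) (alpha T V U : R -> vec3)
    (kg kn tg : R -> R) : Prop :=
  vsmooth_on a b alpha /\ vsmooth_on a b U /\
  forall s, in_I a b s ->
    vderiv alpha s (T s) /\
    vnorm (T s) = 1 /\ vnorm (U s) = 1 /\ dot (T s) (U s) = 0 /\
    V s = cross (U s) (T s) /\
    vderiv T s (vadd (vscale (kg s) (V s)) (vscale (kn s) (U s))) /\
    vderiv V s (vadd (vscale (- kg s) (T s)) (vscale (tg s) (U s))) /\
    vderiv U s (vadd (vscale (- kn s) (T s)) (vscale (- tg s) (V s))).

Definition general_helix (a b : Rbar) (c : R -> vec3) : Prop :=
  exists c' : R -> vec3,
    (forall s, in_I a b s -> vderiv c s (c' s) /\ c' s <> vzero) /\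
    exists (d : vec3) (theta : R), vnorm d = 1 /\
      forall s, in_I a b s -> dot (vscale (/ vnorm (c' s)) (c' s)) d = cos theta.

Definition helical_curve (a b : Rbar) (T : R -> vec3) : Prop :=
  exists (d : vec3) (theta : R), vnorm d = 1 /\
    forall s, in_I a b s -> dot (T s) d = cos theta.

Definition Dn (V U : R -> vec3) (kg kn : R -> R) (s : R) : vec3 :=
  vadd (vscale (- kn s) (V s)) (vscale (kg s) (U s)).

Definition Dn_slant_helix (a b : Rbar) (V U : R -> vec3) (kg kn : R -> R) : Prop :=
  exists (d : vec3) (phi : R), vnorm d = 1 /\
    forall s, in_I a b s ->
      dot (vscale (/ vnorm (Dn V U kg kn s)) (Dn V U kg kn s)) d = cos phi.

Definition assoc_curve (alpha T V U : R -> vec3) (y1 y2 y3 : R -> R) (s : R) : vec3 :=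
  vadd (alpha s) (vadd (vscale (y1 s) (T s))
    (vadd (vscale (y2 s) (V s)) (vscale (y3 s) (U s)))).

(* Main.v *)
Require Import Defs.
From Stdlib Require Import Reals.
From Coquelicot Require Import Coquelicot.
From Stdlib Require Import Lra Psatz Classical ClassicalEpsilon.
Open Scope R_scope.

Lemma d_mult (f g : R -> R) (s df dg : R) : is_derive f s df -> is_derive g s dg ->
  is_derive (fun t => f t * g t) s (df * g s + f s * dg).
Proof. intros H1 H2. exact (is_derive_mult f g s df dg H1 H2 Rmult_comm). Qed.
Lemma d_plus (f g : R -> R) (s df dg : R) : is_derive f s df -> is_derive g s dg ->
  is_derive (fun t => f t + g t) s (df + dg).
Proof. intros H1 H2. exact (is_derive_plus f g s df dg H1 H2). Qed.
Lemma d_minus (f g : R -> R) (s df dg : R) : is_derive f s df -> is_derive g s dg ->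
  is_derive (fun t => f t - g t) s (df - dg).
Proof. intros H1 H2. exact (is_derive_minus f g s df dg H1 H2). Qed.
Lemma d_opp (f : R -> R) (s df : R) : is_derive f s df ->
  is_derive (fun t => - f t) s (- df).
Proof. intros H1. exact (is_derive_opp f s df H1). Qed.
Lemma d_const (c s : R) : is_derive (fun _ => c) s 0.
Proof. exact (is_derive_const c s). Qed.
Lemma d_ext (f g : R -> R) (s l l' : R) : (forall t, f t = g t) -> l = l' -> is_derive f s l -> is_derive g s l'.
Proof. intros H -> H1. apply is_derive_ext with f; auto. Qed.

Lemma c_mult (f g : R -> R) s : continuous f s -> continuous g s -> continuous (fun t => f t * g t) s.
Proof. intros; apply (continuous_mult f g); auto. Qed.
Lemma c_plus (f g : R -> R) s : continuous f s -> continuous g s -> continuous (fun t => f t + g t) s.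
Proof. intros; apply (continuous_plus f g); auto. Qed.
Lemma c_minus (f g : R -> R) s : continuous f s -> continuous g s -> continuous (fun t => f t - g t) s.
Proof. intros; apply (continuous_minus f g); auto. Qed.
Lemma c_opp (f : R -> R) s : continuous f s -> continuous (fun t => - f t) s.
Proof. intros; apply (continuous_opp f); auto. Qed.
Lemma c_const (c : R) s : continuous (fun _ : R => c) s.
Proof. apply continuous_const. Qed.

Lemma vec_eq (u v : vec3) : vx u = vx v -> vy u = vy v -> vz u = vz v -> u = v.
Proof. destruct u as [[u1 u2] u3], v as [[v1 v2] v3]; unfold vx, vy, vz; simpl; intros -> -> ->; auto. Qed.

Definition vcont (X : R -> vec3) s := continuous (fun t => vx (X t)) s /\
  continuous (fun t => vy (X t)) s /\ continuous (fun t => vz (X t)) s.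

Lemma cx u v : vx (cross u v) = vy u * vz v - vz u * vy v. Proof. reflexivity. Qed.
Lemma cy u v : vy (cross u v) = vz u * vx v - vx u * vz v. Proof. reflexivity. Qed.
Lemma cz u v : vz (cross u v) = vx u * vy v - vy u * vx v. Proof. reflexivity. Qed.
Lemma ax u v : vx (vadd u v) = vx u + vx v. Proof. reflexivity. Qed.
Lemma ay u v : vy (vadd u v) = vy u + vy v. Proof. reflexivity. Qed.
Lemma az u v : vz (vadd u v) = vz u + vz v. Proof. reflexivity. Qed.
Lemma sx k u : vx (vscale k u) = k * vx u. Proof. reflexivity. Qed.
Lemma sy k u : vy (vscale k u) = k * vy u. Proof. reflexivity. Qed.
Lemma sz k u : vz (vscale k u) = k * vz u. Proof. reflexivity. Qed.

Lemma vcont_dot X Y s : vcont X s -> vcont Y s -> continuous (fun t => dot (X t) (Y t)) s.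
Proof. intros (H1&H2&H3) (G1&G2&G3).
 exact (c_plus _ _ _ (c_plus _ _ _ (c_mult _ _ _ H1 G1) (c_mult _ _ _ H2 G2)) (c_mult _ _ _ H3 G3)). Qed.
Lemma vcont_cross X Y s : vcont X s -> vcont Y s -> vcont (fun t => cross (X t) (Y t)) s.
Proof. intros (H1&H2&H3) (G1&G2&G3). refine (conj _ (conj _ _)).
 - exact (c_minus _ _ _ (c_mult _ _ _ H2 G3) (c_mult _ _ _ H3 G2)).
 - exact (c_minus _ _ _ (c_mult _ _ _ H3 G1) (c_mult _ _ _ H1 G3)).
 - exact (c_minus _ _ _ (c_mult _ _ _ H1 G2) (c_mult _ _ _ H2 G1)). Qed.
Lemma vcont_const (d : vec3) s : vcont (fun _ => d) s.
Proof. refine (conj _ (conj _ _)); apply c_const. Qed.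
Lemma vcont_add X Y s : vcont X s -> vcont Y s -> vcont (fun t => vadd (X t) (Y t)) s.
Proof. intros (H1&H2&H3) (G1&G2&G3). refine (conj _ (conj _ _)).
 - exact (c_plus _ _ _ H1 G1). - exact (c_plus _ _ _ H2 G2). - exact (c_plus _ _ _ H3 G3). Qed.
Lemma vcont_scale f X s : continuous f s -> vcont X s -> vcont (fun t => vscale (f t) (X t)) s.
Proof. intros F (H1&H2&H3). refine (conj _ (conj _ _)).
 - exact (c_mult _ _ _ F H1). - exact (c_mult _ _ _ F H2). - exact (c_mult _ _ _ F H3). Qed.

Lemma vderiv_cont X s X' : vderiv X s X' -> vcont X s.
Proof. intros (H1&H2&H3); refine (conj _ (conj _ _));
 [apply (ex_derive_continuous (fun t => vx (X t))) | apply (ex_derive_continuous (fun t => vy (X t)))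
 | apply (ex_derive_continuous (fun t => vz (X t)))]; eexists; eauto. Qed.

Lemma vderiv_dot X Y s X' Y' : vderiv X s X' -> vderiv Y s Y' ->
  is_derive (fun t => dot (X t) (Y t)) s (dot X' (Y s) + dot (X s) Y').
Proof. intros (H1&H2&H3) (G1&G2&G3).
 pose proof (d_plus _ _ _ _ _ (d_plus _ _ _ _ _ (d_mult _ _ _ _ _ H1 G1) (d_mult _ _ _ _ _ H2 G2))
   (d_mult _ _ _ _ _ H3 G3)) as K.
 eapply d_ext; [| | exact K]. intro t; reflexivity. cbv beta; unfold dot; ring. Qed.

Lemma vderiv_cross X Y s X' Y' : vderiv X s X' -> vderiv Y s Y' ->
  vderiv (fun t => cross (X t) (Y t)) s (vadd (cross X' (Y s)) (cross (X s) Y')).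
Proof. intros (H1&H2&H3) (G1&G2&G3). refine (conj _ (conj _ _)).
 - pose proof (d_minus _ _ _ _ _ (d_mult _ _ _ _ _ H2 G3) (d_mult _ _ _ _ _ H3 G2)) as K.
   eapply d_ext; [| | exact K]. intro t; reflexivity. cbv beta; rewrite ax, !cx; ring.
 - pose proof (d_minus _ _ _ _ _ (d_mult _ _ _ _ _ H3 G1) (d_mult _ _ _ _ _ H1 G3)) as K.
   eapply d_ext; [| | exact K]. intro t; reflexivity. cbv beta; rewrite ay, !cy; ring.
 - pose proof (d_minus _ _ _ _ _ (d_mult _ _ _ _ _ H1 G2) (d_mult _ _ _ _ _ H2 G1)) as K.
   eapply d_ext; [| | exact K]. intro t; reflexivity. cbv beta; rewrite az, !cz; ring.
Qed.

Lemma vderiv_add X Y s X' Y' : vderiv X s X' -> vderiv Y s Y' ->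
  vderiv (fun t => vadd (X t) (Y t)) s (vadd X' Y').
Proof. intros (H1&H2&H3) (G1&G2&G3). refine (conj _ (conj _ _)).
 - exact (d_plus _ _ _ _ _ H1 G1). - exact (d_plus _ _ _ _ _ H2 G2). - exact (d_plus _ _ _ _ _ H3 G3). Qed.

Lemma vderiv_scale f X s f' X' : is_derive f s f' -> vderiv X s X' ->
  vderiv (fun t => vscale (f t) (X t)) s (vadd (vscale f' (X s)) (vscale (f s) X')).
Proof. intros F (H1&H2&H3). refine (conj _ (conj _ _)).
 - exact (d_mult _ _ _ _ _ F H1). - exact (d_mult _ _ _ _ _ F H2). - exact (d_mult _ _ _ _ _ F H3). Qed.

Lemma vderiv_const (d : vec3) s : vderiv (fun _ => d) s vzero.
Proof. refine (conj _ (conj _ _)); apply d_const. Qed.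

Lemma vderiv_unique X s A B : vderiv X s A -> vderiv X s B -> A = B.
Proof. intros (H1&H2&H3) (G1&G2&G3); apply vec_eq;
 [apply is_derive_unique in H1, G1 | apply is_derive_unique in H2, G2 | apply is_derive_unique in H3, G3];
 congruence. Qed.

Lemma vderiv_ext_loc X Y s A : locally s (fun t => X t = Y t) -> vderiv X s A -> vderiv Y s A.
Proof. intros HL (H1&H2&H3); refine (conj _ (conj _ _)); eapply is_derive_ext_loc; try eassumption;
 eapply filter_imp; try exact HL; intros t ->; reflexivity. Qed.

Lemma is_derive_uniq (f : R -> R) (s a b : R) : is_derive f s a -> is_derive f s b -> a = b.
Proof. intros H1 H2; apply is_derive_unique in H1; apply is_derive_unique in H2; congruence. Qed.

Lemma in_I_locally a b s : in_I a b s -> locally s (in_I a b).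
Proof. intros [H1 H2]. assert (Ho : open (fun u : R => Rbar_lt a u /\ Rbar_lt u b)).
 { apply open_and; [apply open_Rbar_gt | apply open_Rbar_lt]. }
 apply Ho; split; auto. Qed.

Lemma in_I_between a b s1 s2 t : in_I a b s1 -> in_I a b s2 -> s1 <= t <= s2 -> in_I a b t.
Proof. unfold in_I; intros [A1 B1] [A2 B2] [L1 L2]; split.
 - destruct a; simpl in *; auto; lra.
 - destruct b; simpl in *; auto; lra. Qed.

Lemma in_I_ex a b : Rbar_lt a b -> exists s, in_I a b s.
Proof. unfold in_I; destruct a as [a| |], b as [b| |]; simpl; intros H; try contradiction.
 - exists ((a+b)/2); simpl; split; lra.
 - exists (a+1); simpl; split; auto; lra.
 - exists (b-1); simpl; split; auto; lra.
 - exists 0; simpl; auto. Qed.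

Lemma cont_neq0 (F : R -> R) s : continuous F s -> F s <> 0 -> locally s (fun t => F t <> 0).
Proof. intros Hc Hn. destruct (Rlt_or_le 0 (F s)) as [Hp|Hp].
 - assert (Hl : locally (F s) (fun y => 0 < y)) by (apply open_gt; auto).
   specialize (Hc _ Hl). eapply filter_imp; [|exact Hc]. simpl; intros; lra.
 - assert (Hl : locally (F s) (fun y => y < 0)) by (apply open_lt; lra).
   specialize (Hc _ Hl). eapply filter_imp; [|exact Hc]. simpl; intros; lra. Qed.

Lemma cont_pos (F : R -> R) s : continuous F s -> 0 < F s -> locally s (fun t => 0 < F t).
Proof. intros Hc Hp.
 assert (Hl : locally (F s) (fun y => 0 < y)) by (apply open_gt; auto).
 exact (Hc _ Hl). Qed.

Lemma conn_core a b (P : R -> Prop) :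
  (forall s, in_I a b s -> locally s (fun t => P t <-> P s)) ->
  forall x y, in_I a b x -> in_I a b y -> x < y -> P x -> ~ P y -> False.
Proof. intros HL x y Hx Hy Hxy Px NPy.
 set (h := fun t => if excluded_middle_informative (P t) then -1 else 1).
 assert (Hc : forall z, x <= z <= y -> continuity_pt h z).
 { intros z Hz. apply continuity_pt_filterlim.
   assert (Hz' : in_I a b z) by exact (in_I_between a b x y z Hx Hy Hz).
   apply (continuous_ext_loc _ (fun _ => h z)); [| apply continuous_const].
   eapply filter_imp; [|exact (HL z Hz')]. intros t Ht; unfold h.
   cbv beta in Ht |- *; destruct (excluded_middle_informative (P z)), (excluded_middle_informative (P t)); first [reflexivity | tauto]. }
 destruct (Ranalysis5.IVT_interv h x y Hc Hxy) as [z [_ Hz]].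
 - unfold h; destruct (excluded_middle_informative (P x)); [lra|tauto].
 - unfold h; destruct (excluded_middle_informative (P y)); [tauto|lra].
 - revert Hz; unfold h; destruct (excluded_middle_informative (P z)); lra. Qed.

Lemma conn a b (P : R -> Prop) :
  (forall s, in_I a b s -> locally s (fun t => P t <-> P s)) ->
  forall x y, in_I a b x -> in_I a b y -> P x -> P y.
Proof. intros HL x y Hx Hy Px. destruct (classic (P y)) as [|NPy]; auto. exfalso.
 destruct (Rtotal_order x y) as [H|[H|H]].
 - eapply (conn_core a b P HL x y); eauto.
 - subst; tauto.
 - apply (conn_core a b (fun t => ~ P t)) with y x; auto.
   intros s Hs; eapply filter_imp; [|exact (HL s Hs)]; simpl; intros; tauto. Qed.

Lemma deriv0_const a b (f : R -> R) :
  (forall s, in_I a b s -> is_derive f s 0) ->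
  forall x y, in_I a b x -> in_I a b y -> f x = f y.
Proof. intros HD x y Hx Hy.
 assert (K : forall u v, in_I a b u -> in_I a b v -> u < v -> f u = f v).
 { intros u v Hu Hv Huv. apply (eq_is_derive f u v); auto.
   intros t Ht. apply HD. exact (in_I_between a b u v t Hu Hv Ht). }
 destruct (Rtotal_order x y) as [H|[H|H]]; [auto|subst; auto|symmetry; auto]. Qed.

Lemma deriv_loc_const (f : R -> R) (s c l : R) : locally s (fun t => f t = c) -> is_derive f s l -> l = 0.
Proof. intros HL HD. assert (H0 : is_derive f s 0).
 { apply (is_derive_ext_loc (fun _ => c)); [|apply d_const].
   eapply filter_imp; [|exact HL]; intros t Ht; simpl; auto. }
 exact (is_derive_uniq f s l 0 HD H0). Qed.

Definition D2 (X : R -> vec3) (n : nat) (t : R) : vec3 :=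
  mkv (Derive_n (fun u => vx (X u)) n t) (Derive_n (fun u => vy (X u)) n t) (Derive_n (fun u => vz (X u)) n t).

Lemma smooth_deriv a b (f : R -> R) n s : smooth_on a b f -> in_I a b s ->
  is_derive (Derive_n f n) s (Derive_n f (S n) s).
Proof. intros H Hs. specialize (H (S n) s Hs). simpl in H. apply Derive_correct in H. exact H. Qed.

Lemma smooth_cont a b (f : R -> R) n s : smooth_on a b f -> in_I a b s -> continuous (Derive_n f n) s.
Proof. intros H Hs. apply (ex_derive_continuous (Derive_n f n)). eexists. apply (smooth_deriv a b f n s H Hs). Qed.

Lemma vsmooth_deriv a b X n s : vsmooth_on a b X -> in_I a b s -> vderiv (D2 X n) s (D2 X (S n) s).
Proof. intros (H1&H2&H3) Hs. refine (conj _ (conj _ _)).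
 - exact (smooth_deriv a b _ n s H1 Hs).
 - exact (smooth_deriv a b _ n s H2 Hs).
 - exact (smooth_deriv a b _ n s H3 Hs). Qed.

Lemma vnorm1 x : vnorm x = 1 -> dot x x = 1.
Proof. unfold vnorm; intros H. assert (0 <= dot x x) by (unfold dot; nra).
 rewrite <- (sqrt_sqrt (dot x x)); auto. rewrite H; ring. Qed.

Lemma vnorm_sq x : 0 <= dot x x.
Proof. unfold dot; nra. Qed.

Lemma lagrange u v : dot (cross u v) (cross u v) = dot u u * dot v v - dot u v * dot u v.
Proof. destruct u as [[u1 u2] u3], v as [[v1 v2] v3]; unfold dot, cross, mkv, vx, vy, vz; simpl; ring. Qed.

Lemma binet T P Q d : dot (cross T P) Q * dot (cross T P) d =
  dot T T * (dot P P * dot Q d - dot P d * dot Q P)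
  - dot T P * (dot P T * dot Q d - dot P d * dot Q T)
  + dot T d * (dot P T * dot Q P - dot P P * dot Q T).
Proof. destruct T as [[t1 t2] t3], P as [[p1 p2] p3], Q as [[q1 q2] q3], d as [[d1 d2] d3];
 unfold dot, cross, mkv, vx, vy, vz; simpl; ring. Qed.

Lemma tq_ident T P Q d : dot P P * dot (cross T Q) d =
  dot Q P * dot (cross T P) d - dot (cross T P) Q * dot P d + dot T P * dot (cross P Q) d.
Proof. destruct T as [[t1 t2] t3], P as [[p1 p2] p3], Q as [[q1 q2] q3], d as [[d1 d2] d3];
 unfold dot, cross, mkv, vx, vy, vz; simpl; ring. Qed.

Lemma dot_comm u v : dot u v = dot v u. Proof. unfold dot; ring. Qed.
Lemma dot_scale_l k u v : dot (vscale k u) v = k * dot u v. Proof. unfold dot, vscale, mkv, vx, vy, vz; simpl; ring. Qed.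
Lemma dot_add_l u w v : dot (vadd u w) v = dot u v + dot w v. Proof. unfold dot, vadd, mkv, vx, vy, vz; simpl; ring. Qed.
Lemma dot_cross_l u v : dot (cross u v) u = 0. Proof. unfold dot, cross, mkv, vx, vy, vz; simpl; ring. Qed.
Lemma dot_cross_r u v : dot (cross u v) v = 0. Proof. unfold dot, cross, mkv, vx, vy, vz; simpl; ring. Qed.

Lemma frame_facts a b alpha T V U kg kn tg s :
 darboux_frame a b alpha T V U kg kn tg -> in_I a b s ->
 dot (T s) (T s) = 1 /\ dot (U s) (U s) = 1 /\ dot (T s) (U s) = 0 /\ V s = cross (U s) (T s) /\
 D2 alpha 2 s = vadd (vscale (kg s) (V s)) (vscale (kn s) (U s)) /\
 vderiv T s (D2 alpha 2 s) /\ vderiv (D2 alpha 2) s (D2 alpha 3 s) /\ vcont (D2 alpha 3) s /\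
 vcont (D2 alpha 2) s /\ vcont T s /\ vcont U s /\ vcont V s.
Proof. intros (Ha & Hu & HF) Hs.
 destruct (HF s Hs) as (Hd & HT & HU & HTU & HV & HdT & HdV & HdU).
 assert (E1 : locally s (fun t => D2 alpha 1 t = T t)).
 { eapply filter_imp; [|exact (in_I_locally a b s Hs)]. intros t Ht.
   destruct (HF t Ht) as (Hd' & _). destruct Hd' as (K1&K2&K3).
   apply is_derive_unique in K1, K2, K3. apply vec_eq; unfold D2; rewrite ?mx, ?my, ?mz; simpl; auto. }
 assert (HT2 : vderiv T s (D2 alpha 2 s)).
 { apply (vderiv_ext_loc (D2 alpha 1)); auto. apply (vsmooth_deriv a b alpha 1 s Ha Hs). }
 assert (HP2 : D2 alpha 2 s = vadd (vscale (kg s) (V s)) (vscale (kn s) (U s))).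
 { exact (vderiv_unique T s _ _ HT2 HdT). }
 pose proof (vsmooth_deriv a b alpha 2 s Ha Hs) as HP3.
 pose proof (vsmooth_deriv a b alpha 3 s Ha Hs) as HQ.
 exact (conj (vnorm1 _ HT) (conj (vnorm1 _ HU) (conj HTU (conj HV (conj HP2 (conj HT2 (conj HP3
   (conj (vderiv_cont _ _ _ HQ) (conj (vderiv_cont _ _ _ HP3) (conj (vderiv_cont _ _ _ HdT)
   (conj (vderiv_cont _ _ _ HdU) (vderiv_cont _ _ _ HdV)))))))))))).
Qed.

Lemma frame_alg (T U V P : vec3) (kg kn : R) :
 dot T T = 1 -> dot U U = 1 -> dot T U = 0 -> V = cross U T ->
 P = vadd (vscale kg V) (vscale kn U) ->
 dot V T = 0 /\ dot U V = 0 /\ dot V V = 1 /\ dot T P = 0 /\ dot P V = kg /\ dot P U = kn /\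
 dot P P = kg * kg + kn * kn /\
 cross T P = vadd (vscale (- kn) V) (vscale kg U) /\
 dot (cross T P) (cross T P) = dot P P.
Proof. intros HT HU HTU HV HP.
 assert (VT : dot V T = 0) by (rewrite HV; apply dot_cross_r).
 assert (UV : dot U V = 0) by (rewrite HV, dot_comm; apply dot_cross_l).
 assert (VV : dot V V = 1) by (rewrite HV, lagrange, HU, (dot_comm U T), HTU, HT; ring).
 assert (TP : dot T P = 0).
 { rewrite HP, dot_comm, dot_add_l, !dot_scale_l, VT, (dot_comm U T), HTU; ring. }
 assert (PV : dot P V = kg).
 { rewrite HP, dot_add_l, !dot_scale_l, VV, UV; ring. }
 assert (PU : dot P U = kn).
 { rewrite HP, dot_add_l, !dot_scale_l, HU, (dot_comm V U), UV; ring. }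
 assert (PP : dot P P = kg * kg + kn * kn).
 { rewrite HP at 2. rewrite (dot_comm P), dot_add_l, !dot_scale_l, (dot_comm V P), (dot_comm U P), PV, PU; ring. }
 refine (conj VT (conj UV (conj VV (conj TP (conj PV (conj PU (conj PP (conj _ _)))))))).
 - assert (G : forall k1 k2 : R, cross T (vadd (vscale k1 (cross U T)) (vscale k2 U)) =
      vadd (vscale (- k2) (cross U T)) (vadd (vscale (k1 * dot T T) U) (vscale (- k1 * dot T U) T))).
   { intros; destruct T as [[t1 t2] t3], U as [[u1 u2] u3];
     apply vec_eq; unfold dot, cross, vadd, vscale, mkv, vx, vy, vz; simpl; ring. }
   rewrite HP, HV, G, HT, HTU. apply vec_eq; rewrite ?ax, ?ay, ?az, ?sx, ?sy, ?sz; ring.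
 - rewrite lagrange, HT, TP; ring.
Qed.

Lemma QT_ident a b alpha T V U kg kn tg s :
 darboux_frame a b alpha T V U kg kn tg -> in_I a b s ->
 dot (D2 alpha 3 s) (T s) = - dot (D2 alpha 2 s) (D2 alpha 2 s).
Proof. intros HF Hs.
 destruct (frame_facts a b alpha T V U kg kn tg s HF Hs) as (_&_&_&_&_&HT2&HP3&_).
 pose proof (vderiv_dot T (D2 alpha 2) s _ _ HT2 HP3) as K.
 assert (L : locally s (fun t => dot (T t) (D2 alpha 2 t) = 0)).
 { eapply filter_imp; [|exact (in_I_locally a b s Hs)]. intros t Ht.
   destruct (frame_facts a b alpha T V U kg kn tg t HF Ht) as (H1&H2&H3&H4&H5&_).
   destruct (frame_alg _ _ _ _ _ _ H1 H2 H3 H4 H5) as (_&_&_&TP&_); exact TP. }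
 pose proof (deriv_loc_const _ s 0 _ L K) as Z. rewrite (dot_comm (T s)) in Z. lra. Qed.

Lemma cont_negv (F : R -> R) s : continuous F s -> F s < 0 -> locally s (fun t => F t < 0).
Proof. intros Hc Hp.
 assert (Hl : locally (F s) (fun y => y < 0)) by (apply open_lt; auto).
 exact (Hc _ Hl). Qed.

Lemma sign_const a b (F : R -> R) : Rbar_lt a b ->
  (forall s, in_I a b s -> continuous F s /\ F s <> 0) ->
  (forall s, in_I a b s -> 0 < F s) \/ (forall s, in_I a b s -> F s < 0).
Proof. intros Hab H. destruct (in_I_ex a b Hab) as [s0 Hs0].
 assert (HL : forall s, in_I a b s -> locally s (fun t => 0 < F t <-> 0 < F s)).
 { intros s Hs. destruct (H s Hs) as [Hc Hn]. destruct (Rlt_or_le 0 (F s)) as [Hp|Hp].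
   - eapply filter_imp; [|exact (cont_pos F s Hc Hp)]. simpl; intros; tauto.
   - assert (Hneg : F s < 0) by lra.
     eapply filter_imp; [|exact (cont_negv F s Hc Hneg)]. simpl; intros; lra. }
 destruct (Rlt_or_le 0 (F s0)) as [Hp|Hp].
 - left. intros s Hs. exact (conn a b _ HL s0 s Hs0 Hs Hp).
 - right. intros s Hs. destruct (H s Hs) as [_ Hn]. destruct (Rlt_or_le (F s) 0) as [|Hq]; auto.
   exfalso. assert (0 < F s) by lra. assert (0 < F s0) by exact (conn a b _ HL s s0 Hs Hs0 H0).
   destruct (H s0 Hs0); lra. Qed.

Lemma unit_pos (T d : vec3) r : dot T T = 1 -> 0 < r ->
  dot (vscale (/ vnorm (vscale r T)) (vscale r T)) d = dot T d.
Proof. intros HT Hr. unfold vnorm.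
 assert (E : dot (vscale r T) (vscale r T) = r * r).
 { rewrite dot_scale_l, dot_comm, dot_scale_l, HT; ring. }
 rewrite E, sqrt_square by lra. rewrite !dot_scale_l. field. lra. Qed.

Lemma unit_neg (T d : vec3) r : dot T T = 1 -> r < 0 ->
  dot (vscale (/ vnorm (vscale r T)) (vscale r T)) d = - dot T d.
Proof. intros HT Hr. unfold vnorm.
 assert (E : dot (vscale r T) (vscale r T) = (-r) * (-r)).
 { rewrite dot_scale_l, dot_comm, dot_scale_l, HT; ring. }
 rewrite E, sqrt_square by lra. rewrite !dot_scale_l. field. lra. Qed.

Lemma smooth0 a b (y : R -> R) s : smooth_on a b y -> in_I a b s -> is_derive y s (Derive_n y 1 s).
Proof. intros H Hs. exact (smooth_deriv a b y 0 s H Hs). Qed.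

Lemma smooth0c a b (y : R -> R) s : smooth_on a b y -> in_I a b s -> continuous y s.
Proof. intros H Hs. exact (smooth_cont a b y 0 s H Hs). Qed.

Definition Fg (alpha V U : R -> vec3) (y1 y2 y3 : R -> R) (t : R) : R :=
  1 + Derive_n y1 1 t - y2 t * dot (D2 alpha 2 t) (V t) - y3 t * dot (D2 alpha 2 t) (U t).

Lemma Rf_eq a b alpha T V U kg kn tg y1 y2 y3 (Rf : R -> R) s :
  darboux_frame a b alpha T V U kg kn tg -> in_I a b s ->
  smooth_on a b y1 -> smooth_on a b y2 -> smooth_on a b y3 ->
  vderiv (assoc_curve alpha T V U y1 y2 y3) s (vscale (Rf s) (T s)) ->
  Rf s = Fg alpha V U y1 y2 y3 s.
Proof. intros HF Hs S1 S2 S3 HG.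
 pose proof HF as (Ha & Hu & HF').
 destruct (HF' s Hs) as (Hd & _ & _ & _ & _ & HdT & HdV & HdU).
 destruct (frame_facts a b alpha T V U kg kn tg s HF Hs) as (H1&H2&H3&H4&H5&_).
 destruct (frame_alg _ _ _ _ _ _ H1 H2 H3 H4 H5) as (VT&UV&VV&TP&PV&PU&_).
 pose proof (vderiv_add _ _ _ _ _ Hd (vderiv_add _ _ _ _ _ (vderiv_scale _ _ _ _ _ (smooth0 a b y1 s S1 Hs) HdT)
   (vderiv_add _ _ _ _ _ (vderiv_scale _ _ _ _ _ (smooth0 a b y2 s S2 Hs) HdV)
      (vderiv_scale _ _ _ _ _ (smooth0 a b y3 s S3 Hs) HdU)))) as K.
 pose proof (vderiv_unique _ _ _ _ HG K) as E.
 apply (f_equal (fun w => dot w (T s))) in E.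
 unfold Fg. rewrite PV, PU.
 rewrite dot_scale_l, H1, Rmult_1_r in E. rewrite E.
 rewrite !dot_add_l, !dot_scale_l, !dot_add_l, !dot_scale_l.
 rewrite H1, VT, (dot_comm (U s) (T s)), H3. ring. Qed.

Lemma Fg_cont a b alpha T V U kg kn tg y1 y2 y3 s :
  darboux_frame a b alpha T V U kg kn tg -> in_I a b s ->
  smooth_on a b y1 -> smooth_on a b y2 -> smooth_on a b y3 ->
  continuous (Fg alpha V U y1 y2 y3) s.
Proof. intros HF Hs S1 S2 S3.
 destruct (frame_facts a b alpha T V U kg kn tg s HF Hs) as (_&_&_&_&_&_&_&_&CP&CT&CU&CV).
 unfold Fg. apply c_minus; [apply c_minus|]; [apply c_plus| |].
 - apply c_const.
 - exact (smooth_cont a b y1 1 s S1 Hs).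
 - apply c_mult; [exact (smooth0c a b y2 s S2 Hs)| exact (vcont_dot _ _ _ CP CV)].
 - apply c_mult; [exact (smooth0c a b y3 s S3 Hs)| exact (vcont_dot _ _ _ CP CU)].
Qed.

Lemma part1 (a b : Rbar) (alpha T V U : R -> vec3) (kg kn tg : R -> R) (y1 y2 y3 : R -> R) :
  Rbar_lt a b ->
  darboux_frame a b alpha T V U kg kn tg ->
  smooth_on a b y1 -> smooth_on a b y2 -> smooth_on a b y3 ->
  (exists Rf : R -> R, forall s, in_I a b s ->
      Rf s <> 0 /\ vderiv (assoc_curve alpha T V U y1 y2 y3) s (vscale (Rf s) (T s))) ->
  (general_helix a b (assoc_curve alpha T V U y1 y2 y3) <-> helical_curve a b T).
Proof. intros Hab HF S1 S2 S3 [Rf HR].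
 assert (HE : forall s, in_I a b s -> Rf s = Fg alpha V U y1 y2 y3 s).
 { intros s Hs; destruct (HR s Hs) as [_ HG]; exact (Rf_eq a b alpha T V U kg kn tg y1 y2 y3 Rf s HF Hs S1 S2 S3 HG). }
 assert (HTT : forall s, in_I a b s -> dot (T s) (T s) = 1).
 { intros s Hs; destruct (frame_facts a b alpha T V U kg kn tg s HF Hs) as (H1&_); exact H1. }
 assert (Hsg : (forall s, in_I a b s -> 0 < Rf s) \/ (forall s, in_I a b s -> Rf s < 0)).
 { destruct (sign_const a b (Fg alpha V U y1 y2 y3) Hab) as [Hp|Hn].
   - intros s Hs; split; [exact (Fg_cont a b alpha T V U kg kn tg y1 y2 y3 s HF Hs S1 S2 S3)|].
     rewrite <- HE by exact Hs. apply (HR s Hs).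
   - left; intros s Hs; rewrite HE by exact Hs; auto.
   - right; intros s Hs; rewrite HE by exact Hs; auto. }
 split.
 - intros (c' & Hc' & d & th & Hd & Hdot).
   assert (Ec : forall s, in_I a b s -> c' s = vscale (Rf s) (T s)).
   { intros s Hs. destruct (Hc' s Hs) as [H1 _]. destruct (HR s Hs) as [_ H2].
     exact (vderiv_unique _ _ _ _ H1 H2). }
   exists d. destruct Hsg as [Hp|Hn].
   + exists th; split; auto. intros s Hs. rewrite <- (Hdot s Hs), (Ec s Hs).
     symmetry; apply unit_pos; auto.
   + exists (th + PI); split; auto. intros s Hs. rewrite neg_cos, <- (Hdot s Hs), (Ec s Hs).
     rewrite unit_neg; auto. ring.
 - intros (d & th & Hd & Hdot).
   exists (fun s => vscale (Rf s) (T s)). split.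
   + intros s Hs. destruct (HR s Hs) as [Hn HG]. split; auto.
     intro Z. apply (f_equal (fun w => dot w w)) in Z.
     rewrite dot_scale_l, dot_comm, dot_scale_l, HTT in Z by exact Hs.
     unfold vzero, dot, mkv, vx, vy, vz in Z; simpl in Z.
     apply Hn. nra.
   + exists d. destruct Hsg as [Hp|Hn].
     * exists th; split; auto. intros s Hs. rewrite unit_pos; auto.
     * exists (th + PI); split; auto. intros s Hs. rewrite unit_neg, neg_cos, Hdot; auto.
Qed.

Lemma pf a b alpha T V U kg kn tg s :
 darboux_frame a b alpha T V U kg kn tg ->
 (forall s, in_I a b s -> kg s <> 0 \/ kn s <> 0) -> in_I a b s ->
 dot (T s) (T s) = 1 /\ dot (T s) (D2 alpha 2 s) = 0 /\ 0 < dot (D2 alpha 2 s) (D2 alpha 2 s) /\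
 dot (D2 alpha 3 s) (T s) = - dot (D2 alpha 2 s) (D2 alpha 2 s) /\
 Dn V U kg kn s = cross (T s) (D2 alpha 2 s) /\
 dot (cross (T s) (D2 alpha 2 s)) (cross (T s) (D2 alpha 2 s)) = dot (D2 alpha 2 s) (D2 alpha 2 s) /\
 vderiv T s (D2 alpha 2 s) /\ vderiv (D2 alpha 2) s (D2 alpha 3 s) /\
 vcont T s /\ vcont (D2 alpha 2) s /\ vcont (D2 alpha 3) s.
Proof. intros HF Hk Hs.
 destruct (frame_facts a b alpha T V U kg kn tg s HF Hs) as (H1&H2&H3&H4&H5&HT2&HP3&CQ&CP&CT&_).
 destruct (frame_alg _ _ _ _ _ _ H1 H2 H3 H4 H5) as (VT&UV&VV&TP&PV&PU&PP&CR&DD).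
 refine (conj H1 (conj TP (conj _ (conj (QT_ident a b alpha T V U kg kn tg s HF Hs)
   (conj _ (conj DD (conj HT2 (conj HP3 (conj CT (conj CP CQ)))))))))).
 - rewrite PP. destruct (Hk s Hs); nra.
 - rewrite CR. reflexivity.
Qed.

Lemma deriv_dot_c X s X' d : vderiv X s X' -> is_derive (fun t => dot (X t) d) s (dot X' d).
Proof. intros H. pose proof (vderiv_dot X (fun _ => d) s X' vzero H (vderiv_const d s)) as K.
 eapply d_ext; [| |exact K]. intro; reflexivity. unfold dot, vzero, mkv, vx, vy, vz; simpl; ring. Qed.

Lemma cross_self u : cross u u = vzero.
Proof. apply vec_eq; unfold cross, vzero, mkv, vx, vy, vz; simpl; ring. Qed.

Lemma deriv_h T P s Ps Qs e : vderiv T s Ps -> vderiv P s Qs -> Ps = P s ->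
  is_derive (fun t => dot (cross (T t) (P t)) e) s (dot (cross (T s) Qs) e).
Proof. intros H1 H2 E. pose proof (deriv_dot_c _ s _ e (vderiv_cross T P s _ _ H1 H2)) as K.
 eapply d_ext; [| |exact K]. intro; reflexivity. rewrite E, cross_self, dot_add_l.
 unfold dot at 1, vzero, mkv, vx, vy, vz; simpl; ring. Qed.

Lemma deriv_sqrtPP P s Qs : vderiv P s Qs -> 0 < dot (P s) (P s) ->
  is_derive (fun t => sqrt (dot (P t) (P t))) s (dot (P s) Qs / sqrt (dot (P s) (P s))).
Proof. intros H Hp. pose proof (is_derive_sqrt _ s _ (vderiv_dot P P s _ _ H H) Hp) as K.
 eapply d_ext; [| |exact K]. intro; reflexivity.
 assert (0 < sqrt (dot (P s) (P s))) by (apply sqrt_lt_R0; auto).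
 rewrite (dot_comm Qs). field. lra. Qed.

Lemma sq_const a b (g : R -> R) (K : R) :
  (forall s, in_I a b s -> continuous g s) -> (forall s, in_I a b s -> g s * g s = K) ->
  forall s0 s, in_I a b s0 -> in_I a b s -> g s = g s0.
Proof. intros Hc Hq s0 s Hs0 Hs.
 assert (HL : forall s, in_I a b s -> locally s (fun t => g t = g s0 <-> g s = g s0)).
 { intros u Hu. destruct (Rtotal_order (g u) 0) as [Hn|[Hz|Hp]].
   - eapply filter_imp; [|exact (filter_and _ _ (cont_negv g u (Hc u Hu) Hn) (in_I_locally a b u Hu))].
     intros t [Ht Hti]. assert (g t = g u) by (pose proof (Hq t Hti); pose proof (Hq u Hu); nra).
     rewrite H; tauto.
   - assert (K = 0) by (rewrite <- (Hq u Hu), Hz; ring).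
     assert (g s0 = 0) by (pose proof (Hq s0 Hs0); nra).
     eapply filter_imp; [|exact (in_I_locally a b u Hu)].
     intros t Hti. assert (g t = 0) by (pose proof (Hq t Hti); nra). lra.
   - eapply filter_imp; [|exact (filter_and _ _ (cont_pos g u (Hc u Hu) Hp) (in_I_locally a b u Hu))].
     intros t [Ht Hti]. assert (g t = g u) by (pose proof (Hq t Hti); pose proof (Hq u Hu); nra).
     rewrite H; tauto. }
 exact (conn a b (fun t => g t = g s0) HL s0 s Hs0 Hs eq_refl).
Qed.

Lemma sqrt_sq_pos x : 0 < x -> sqrt x * sqrt x = x /\ 0 < sqrt x.
Proof. intros; split; [apply sqrt_sqrt; lra | apply sqrt_lt_R0; auto]. Qed.

Definition gfun (T P : R -> vec3) (d : vec3) (t : R) : R :=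
  dot (cross (T t) (P t)) d * / sqrt (dot (P t) (P t)).

Lemma gfun_cont (T P : R -> vec3) d s : vcont T s -> vcont P s -> 0 < dot (P s) (P s) ->
  continuous (gfun T P d) s.
Proof. intros CT CP Hp. unfold gfun. apply c_mult.
 - exact (vcont_dot _ _ _ (vcont_cross _ _ _ CT CP) (vcont_const d s)).
 - apply continuous_Rinv_comp. apply continuous_sqrt_comp. exact (vcont_dot _ _ _ CP CP).
   destruct (sqrt_sq_pos _ Hp); lra. Qed.

Lemma part2a (a b : Rbar) (alpha T V U : R -> vec3) (kg kn tg : R -> R) :
  Rbar_lt a b ->
  darboux_frame a b alpha T V U kg kn tg ->
  (forall s, in_I a b s -> kg s <> 0 \/ kn s <> 0) ->
  helical_curve a b T -> Dn_slant_helix a b V U kg kn.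
Proof. intros Hab HF Hk (d & th & Hd & Hdot).
 pose proof (vnorm1 d Hd) as Hdd.
 assert (Hp : forall s, in_I a b s -> dot (D2 alpha 2 s) d = 0).
 { intros s Hs. destruct (pf a b alpha T V U kg kn tg s HF Hk Hs) as (_&_&_&_&_&_&HT2&_).
   apply (deriv_loc_const (fun t => dot (T t) d) s (cos th)); [|exact (deriv_dot_c _ _ _ d HT2)].
   eapply filter_imp; [|exact (in_I_locally a b s Hs)]. intros t Ht. exact (Hdot t Ht). }
 set (g := gfun T (D2 alpha 2) d).
 assert (Hgc : forall s, in_I a b s -> continuous g s).
 { intros s Hs. destruct (pf a b alpha T V U kg kn tg s HF Hk Hs) as (_&_&PP&_&_&_&_&_&CT&CP&_).
   exact (gfun_cont _ _ d s CT CP PP). }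
 assert (Hg2 : forall s, in_I a b s -> g s * g s = 1 - cos th * cos th).
 { intros s Hs. destruct (pf a b alpha T V U kg kn tg s HF Hk Hs) as (TT&TP&PP&_&_&DD&_).
   pose proof (binet (T s) (D2 alpha 2 s) d d) as Bi.
   rewrite TT, TP, (dot_comm (D2 alpha 2 s) (T s)), TP, (dot_comm d (D2 alpha 2 s)), (Hp s Hs),
     Hdd, (dot_comm d (T s)), (Hdot s Hs) in Bi.
   destruct (sqrt_sq_pos _ PP) as [E1 E2].
   unfold g, gfun. revert Bi E1 E2.
   generalize (dot (cross (T s) (D2 alpha 2 s)) d) (sqrt (dot (D2 alpha 2 s) (D2 alpha 2 s)))
     (dot (D2 alpha 2 s) (D2 alpha 2 s)). intros h r k Bi E1 E2.
   rewrite <- E1 in Bi. field_simplify_eq; [|lra]. nra. }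
 destruct (in_I_ex a b Hab) as [s0 Hs0].
 assert (Hb : -1 <= g s0 <= 1).
 { pose proof (Hg2 s0 Hs0). pose proof (Rle_0_sqr (cos th)). unfold Rsqr in *. nra. }
 exists d, (acos (g s0)). split; auto. intros s Hs.
 destruct (pf a b alpha T V U kg kn tg s HF Hk Hs) as (TT&TP&PP&_&DnE&DD&_).
 rewrite cos_acos by exact Hb.
 rewrite <- (sq_const a b g _ Hgc Hg2 s0 s Hs0 Hs).
 rewrite DnE, dot_scale_l. unfold vnorm. rewrite DD. unfold g, gfun. ring.
Qed.

Lemma dot_e1 X : dot X (mkv 1 0 0) = vx X. Proof. unfold dot, mkv, vx, vy, vz; simpl; ring. Qed.
Lemma dot_e2 X : dot X (mkv 0 1 0) = vy X. Proof. unfold dot, mkv, vx, vy, vz; simpl; ring. Qed.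
Lemma dot_e3 X : dot X (mkv 0 0 1) = vz X. Proof. unfold dot, mkv, vx, vy, vz; simpl; ring. Qed.

Lemma part2b (a b : Rbar) (alpha T V U : R -> vec3) (kg kn tg : R -> R) :
  Rbar_lt a b ->
  darboux_frame a b alpha T V U kg kn tg ->
  (forall s, in_I a b s -> kg s <> 0 \/ kn s <> 0) ->
  Dn_slant_helix a b V U kg kn -> helical_curve a b T.
Proof. intros Hab HF Hk (d & ph & Hd & Hw).
 pose proof (vnorm1 d Hd) as Hdd.
 set (c := cos ph) in *.
 assert (Hh : forall s, in_I a b s ->
   dot (cross (T s) (D2 alpha 2 s)) d = c * sqrt (dot (D2 alpha 2 s) (D2 alpha 2 s))).
 { intros s Hs. destruct (pf a b alpha T V U kg kn tg s HF Hk Hs) as (TT&TP&PP&_&DnE&DD&_).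
   pose proof (Hw s Hs) as W. rewrite DnE, dot_scale_l in W. unfold vnorm in W. rewrite DD in W.
   destruct (sqrt_sq_pos _ PP) as [E1 E2]. rewrite <- W. field. lra. }
 assert (Hgram : forall s, in_I a b s ->
   c * c * dot (D2 alpha 2 s) (D2 alpha 2 s) = dot (D2 alpha 2 s) (D2 alpha 2 s)
     - dot (D2 alpha 2 s) d * dot (D2 alpha 2 s) d
     - dot (D2 alpha 2 s) (D2 alpha 2 s) * (dot (T s) d * dot (T s) d)).
 { intros s Hs. destruct (pf a b alpha T V U kg kn tg s HF Hk Hs) as (TT&TP&PP&_&DnE&DD&_).
   pose proof (binet (T s) (D2 alpha 2 s) d d) as Bi.
   rewrite TT, TP, (dot_comm (D2 alpha 2 s) (T s)), TP, (dot_comm d (D2 alpha 2 s)),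
     Hdd, (dot_comm d (T s)), (Hh s Hs) in Bi.
   destruct (sqrt_sq_pos _ PP) as [E1 E2].
   revert Bi E1. generalize (sqrt (dot (D2 alpha 2 s) (D2 alpha 2 s))). intros r Bi E1.
   rewrite <- E1. rewrite <- E1 in Bi. transitivity (c * r * (c * r)); [ring | rewrite Bi; ring]. }
 destruct (in_I_ex a b Hab) as [s0 Hs0].
 destruct (Req_dec (c * c) 1) as [Hc1|Hc1].
 { exists d, (PI / 2). split; auto. intros s Hs. rewrite cos_PI2.
   destruct (pf a b alpha T V U kg kn tg s HF Hk Hs) as (TT&TP&PP&_).
   pose proof (Hgram s Hs) as G. rewrite Hc1 in G.
   pose proof (Rle_0_sqr (dot (D2 alpha 2 s) d)). pose proof (Rle_0_sqr (dot (T s) d)). unfold Rsqr in *.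
   assert (E : dot (D2 alpha 2 s) (D2 alpha 2 s) * (dot (T s) d * dot (T s) d) = 0) by nra.
   apply Rmult_integral in E. destruct E as [E|E]; [lra|]. apply Rmult_integral in E. destruct E; auto. }
 set (sg := fun t => dot (cross (T t) (D2 alpha 2 t)) (D2 alpha 3 t)).
 set (p := fun t => dot (D2 alpha 2 t) d).
 set (q := fun t => dot (D2 alpha 3 t) d).
 assert (Hsp : forall s, in_I a b s -> sg s * p s = 0).
 { intros s Hs. destruct (pf a b alpha T V U kg kn tg s HF Hk Hs) as (TT&TP&PP&QT&DnE&DD&HT2&HP3&_).
   pose proof (deriv_h T (D2 alpha 2) s _ _ d HT2 HP3 eq_refl) as K1.
   pose proof (d_mult _ _ s _ _ (d_const c s) (deriv_sqrtPP (D2 alpha 2) s _ HP3 PP)) as K2.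
   assert (L : locally s (fun t => c * sqrt (dot (D2 alpha 2 t) (D2 alpha 2 t)) = dot (cross (T t) (D2 alpha 2 t)) d)).
   { eapply filter_imp; [|exact (in_I_locally a b s Hs)]. intros t Ht. symmetry; exact (Hh t Ht). }
   pose proof (is_derive_ext_loc _ _ s _ L K2) as K3.
   pose proof (is_derive_uniq _ s _ _ K1 K3) as E.
   pose proof (tq_ident (T s) (D2 alpha 2 s) (D2 alpha 3 s) d) as Tq.
   rewrite TP, (Hh s Hs), E in Tq.
   destruct (sqrt_sq_pos _ PP) as [E1 E2].
   unfold sg, p. rewrite (dot_comm (D2 alpha 3 s) (D2 alpha 2 s)) in Tq.
   revert Tq E1 E2. generalize (sqrt (dot (D2 alpha 2 s) (D2 alpha 2 s))). intros r Tq E1 E2.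
   rewrite <- E1 in Tq. field_simplify in Tq; [|lra]. 
   assert (Z : r * (dot (cross (T s) (D2 alpha 2 s)) (D2 alpha 3 s) * dot (D2 alpha 2 s) d) = 0) by nra.
   apply Rmult_integral in Z. destruct Z as [Z|Z]; [lra|exact Z]. }
 assert (Hqd : forall s, in_I a b s -> sg s = 0 -> p s = 0 -> q s <> 0).
 { intros s Hs Hz Hp0. destruct (pf a b alpha T V U kg kn tg s HF Hk Hs) as (TT&TP&PP&QT&_).
   pose proof (binet (T s) (D2 alpha 2 s) (D2 alpha 3 s) d) as Bi.
   unfold sg, p, q in *. rewrite Hz, TT, TP, (dot_comm (D2 alpha 2 s) (T s)), TP, Hp0, QT in Bi.
   pose proof (Hgram s Hs) as G. rewrite Hp0 in G.
   intro Hq0. rewrite Hq0 in Bi.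
   assert (E : dot (T s) d * (dot (D2 alpha 2 s) (D2 alpha 2 s) * dot (D2 alpha 2 s) (D2 alpha 2 s)) = 0) by nra.
   apply Rmult_integral in E. destruct E as [E|E].
   - rewrite E in G. apply Hc1. nra.
   - nra. }
 assert (Csg : forall s, in_I a b s -> continuous sg s).
 { intros s Hs. destruct (pf a b alpha T V U kg kn tg s HF Hk Hs) as (_&_&_&_&_&_&_&_&CT&CP&CQ).
   exact (vcont_dot _ _ _ (vcont_cross _ _ _ CT CP) CQ). }
 assert (Cp : forall s, in_I a b s -> continuous p s).
 { intros s Hs. destruct (pf a b alpha T V U kg kn tg s HF Hk Hs) as (_&_&_&_&_&_&_&_&CT&CP&CQ).
   exact (vcont_dot _ _ _ CP (vcont_const d s)). }
 assert (Cq : forall s, in_I a b s -> continuous q s).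
 { intros s Hs. destruct (pf a b alpha T V U kg kn tg s HF Hk Hs) as (_&_&_&_&_&_&_&_&CT&CP&CQ).
   exact (vcont_dot _ _ _ CQ (vcont_const d s)). }
 assert (HL : forall u, in_I a b u -> locally u (fun t => sg t = 0 <-> sg u = 0)).
 { intros u Hu. destruct (Req_dec (sg u) 0) as [Hz|Hz].
   - destruct (Req_dec (p u) 0) as [Hp0|Hp0].
     + pose proof (cont_neq0 q u (Cq u Hu) (Hqd u Hu Hz Hp0)) as Lq.
       eapply filter_imp; [|exact (filter_and _ _ Lq (in_I_locally a b u Hu))].
       intros t [Hqt Ht]. enough (sg t = 0) by tauto.
       destruct (Req_dec (sg t) 0) as [|Hst]; auto. exfalso.
       pose proof (cont_neq0 sg t (Csg t Ht) Hst) as Ls.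
       assert (Lp : locally t (fun v => p v = 0)).
       { eapply filter_imp; [|exact (filter_and _ _ Ls (in_I_locally a b t Ht))].
         intros v [Hv Hvi]. pose proof (Hsp v Hvi). apply Rmult_integral in H. destruct H; [contradiction|auto]. }
       destruct (pf a b alpha T V U kg kn tg t HF Hk Ht) as (_&_&_&_&_&_&_&HP3&_).
       pose proof (deriv_dot_c _ t _ d HP3) as K.
       apply Hqt. exact (deriv_loc_const p t 0 _ Lp K).
     + pose proof (cont_neq0 p u (Cp u Hu) Hp0) as Lp.
       eapply filter_imp; [|exact (filter_and _ _ Lp (in_I_locally a b u Hu))].
       intros t [Hpt Ht]. pose proof (Hsp t Ht). apply Rmult_integral in H. destruct H; [tauto|contradiction].
   - pose proof (cont_neq0 sg u (Csg u Hu) Hz) as Ls.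
     eapply filter_imp; [|exact Ls]. intros t Ht. cbv beta in *. split; intro; contradiction. }
 destruct (Req_dec (sg s0) 0) as [Z0|Z0].
 - assert (Zall : forall s, in_I a b s -> sg s = 0).
   { intros s Hs. exact (conn a b (fun t => sg t = 0) HL s0 s Hs0 Hs Z0). }
   assert (Wc : forall e s, in_I a b s -> gfun T (D2 alpha 2) e s = gfun T (D2 alpha 2) e s0).
   { intros e s Hs. apply (deriv0_const a b (gfun T (D2 alpha 2) e)); auto.
     intros u Hu. destruct (pf a b alpha T V U kg kn tg u HF Hk Hu) as (TT&TP&PP&QT&DnE&DD&HT2&HP3&_).
     destruct (sqrt_sq_pos _ PP) as [E1 E2].
     pose proof (deriv_h T (D2 alpha 2) u _ _ e HT2 HP3 eq_refl) as K1.
     pose proof (is_derive_inv _ u _ (deriv_sqrtPP (D2 alpha 2) u _ HP3 PP) ltac:(lra)) as K2.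
     pose proof (d_mult _ _ u _ _ K1 K2) as K.
     eapply d_ext; [| | exact K]. intro; reflexivity.
     pose proof (tq_ident (T u) (D2 alpha 2 u) (D2 alpha 3 u) e) as Tq.
     pose proof (Zall u Hu) as Zu. unfold sg in Zu.
     rewrite TP, Zu, (dot_comm (D2 alpha 3 u) (D2 alpha 2 u)) in Tq.
     cbv beta. set (r := sqrt (dot (D2 alpha 2 u) (D2 alpha 2 u))) in *.
     rewrite <- E1 in Tq.
     assert (X : dot (cross (T u) (D2 alpha 3 u)) e =
        dot (D2 alpha 2 u) (D2 alpha 3 u) * dot (cross (T u) (D2 alpha 2 u)) e / (r * r)).
     { apply (Rmult_eq_reg_l (r * r)); [|nra]. field_simplify; [|lra]. lra. }
     rewrite X. field. lra. }
   set (W0 := vscale (/ sqrt (dot (D2 alpha 2 s0) (D2 alpha 2 s0))) (cross (T s0) (D2 alpha 2 s0))).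
   exists W0, (PI / 2). split.
   + destruct (pf a b alpha T V U kg kn tg s0 HF Hk Hs0) as (TT&TP&PP&QT&DnE&DD&_).
     destruct (sqrt_sq_pos _ PP) as [E1 E2].
     assert (D : dot W0 W0 = 1).
     { unfold W0. rewrite dot_scale_l, (dot_comm (cross (T s0) (D2 alpha 2 s0))), dot_scale_l, DD.
       set (r := sqrt (dot (D2 alpha 2 s0) (D2 alpha 2 s0))) in *. rewrite <- E1. field. lra. }
     unfold vnorm. rewrite D. apply sqrt_1.
   + intros s Hs. rewrite cos_PI2.
     assert (EW : W0 = vscale (/ sqrt (dot (D2 alpha 2 s) (D2 alpha 2 s))) (cross (T s) (D2 alpha 2 s))).
     { pose proof (Wc (mkv 1 0 0) s Hs) as W1. pose proof (Wc (mkv 0 1 0) s Hs) as W2.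
       pose proof (Wc (mkv 0 0 1) s Hs) as W3.
       unfold gfun in W1, W2, W3. rewrite !dot_e1 in W1. rewrite !dot_e2 in W2. rewrite !dot_e3 in W3.
       unfold W0; apply vec_eq; rewrite ?sx, ?sy, ?sz.
       - rewrite (Rmult_comm _ (vx (cross (T s0) _))), (Rmult_comm _ (vx (cross (T s) _))). symmetry; exact W1.
       - rewrite (Rmult_comm _ (vy (cross (T s0) _))), (Rmult_comm _ (vy (cross (T s) _))). symmetry; exact W2.
       - rewrite (Rmult_comm _ (vz (cross (T s0) _))), (Rmult_comm _ (vz (cross (T s) _))). symmetry; exact W3. }
     rewrite EW, dot_comm, dot_scale_l, dot_cross_l. ring.
 - assert (Nall : forall s, in_I a b s -> sg s <> 0).
   { intros s Hs Hz. apply Z0. exact (conn a b (fun t => sg t = 0) HL s s0 Hs Hs0 Hz). }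
   assert (Pall : forall s, in_I a b s -> p s = 0).
   { intros s Hs. pose proof (Hsp s Hs) as H. apply Rmult_integral in H. destruct H as [H|H]; auto.
     exfalso; exact (Nall s Hs H). }
   assert (Fc : forall s, in_I a b s -> dot (T s) d = dot (T s0) d).
   { intros s Hs. apply (deriv0_const a b (fun t => dot (T t) d)); auto.
     intros u Hu. destruct (pf a b alpha T V U kg kn tg u HF Hk Hu) as (_&_&_&_&_&_&HT2&_).
     pose proof (deriv_dot_c _ u _ d HT2) as K. pose proof (Pall u Hu) as Pu. unfold p in Pu.
     rewrite Pu in K. exact K. }
   assert (Hb : -1 <= dot (T s0) d <= 1).
   { destruct (pf a b alpha T V U kg kn tg s0 HF Hk Hs0) as (_&_&PP&_).
     pose proof (Hgram s0 Hs0) as G. pose proof (Pall s0 Hs0) as P0. unfold p in P0. rewrite P0 in G.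
     assert (E : (1 - c * c - dot (T s0) d * dot (T s0) d) * dot (D2 alpha 2 s0) (D2 alpha 2 s0) = 0) by lra.
     apply Rmult_integral in E. destruct E as [E|E]; [|lra].
     pose proof (Rle_0_sqr c). unfold Rsqr in *. nra. }
   exists d, (acos (dot (T s0) d)). split; auto. intros s Hs.
   rewrite cos_acos by exact Hb. exact (Fc s Hs).
Qed.

Theorem theorem3p1 (a b : Rbar) (alpha T V U : R -> vec3) (kg kn tg : R -> R)
    (y1 y2 y3 : R -> R) :
  Rbar_lt a b ->
  darboux_frame a b alpha T V U kg kn tg ->
  (forall s, in_I a b s -> kg s <> 0 \/ kn s <> 0) ->
  smooth_on a b y1 -> smooth_on a b y2 -> smooth_on a b y3 ->
  (exists Rf : R -> R, forall s, in_I a b s ->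
      Rf s <> 0 /\ vderiv (assoc_curve alpha T V U y1 y2 y3) s (vscale (Rf s) (T s))) ->
  (general_helix a b (assoc_curve alpha T V U y1 y2 y3) <-> helical_curve a b T) /\
  (helical_curve a b T <-> Dn_slant_helix a b V U kg kn).
Proof.
  intros Hab HF Hk S1 S2 S3 HR. split.
  - exact (part1 a b alpha T V U kg kn tg y1 y2 y3 Hab HF S1 S2 S3 HR).
  - split.
    + exact (part2a a b alpha T V U kg kn tg Hab HF Hk).
    + exact (part2b a b alpha T V U kg kn tg Hab HF Hk).
Qed.
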